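(* Let $M$ be a finite set of integers in $[-t,t]$ for an integer $t\ge1$, and let $K\ge2$ be an integer. For each $m\in M$ set $m'=\frac{m}{t\sqrt K}$ and define $X=\{\ell_m=(-\sqrt{1-m'^2},m',0)^\top: m\in M\}\cup\{r_m=(\sqrt{1-m'^2},0,m')^\top: m\in M\}\subseteq S^2$, and let $k=2K$. If $M$ has a $K$-subset with zero sum, then $X$ has a $k$-subset $T$ with centroid $z_T=0$. Otherwise, every $k$-subset $T\subseteq X$ satisfies $\|z_T\|\ge\frac{1}{2tK^{3/2}}$.
   Context: The centroid of a finite set $T\subseteq\mathbb{R}^3$ is $z_T=\frac{1}{|T|}\sum_{u\in T}u$; $\|\cdot\|$ is the Euclidean norm and $S^2$ the unit sphere in $\mathbb{R}^3$. *)

(* Defs.v *)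
From HB Require Import structures.
From mathcomp Require Import all_boot all_order all_algebra.
From mathcomp Require Import finmap.
From mathcomp Require Import reals.
Set Implicit Arguments. Unset Strict Implicit. Unset Printing Implicit Defensive.
Import Order.TTheory GRing.Theory Num.Theory.
Local Open Scope ring_scope.
Local Open Scope fset_scope.

Section Defs.
Variable R : realType.

Definition vec3 (a b c : R) : 'rV[R]_3 := \row_(i < 3) [:: a; b; c]`_i.

Definition enorm (v : 'rV[R]_3) : R := Num.sqrt (\sum_(i < 3) v 0 i ^+ 2).

Definition centroid (T : {fset 'rV[R]_3}) : 'rV[R]_3 :=
  (#|` T|%:R)^-1 *: \sum_(u <- T) u.

Definition mprime (t K : nat) (m : int) : R := m%:~R / (t%:R * Num.sqrt K%:R).

Definition lpt (t K : nat) (m : int) : 'rV[R]_3 :=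
  vec3 (- Num.sqrt (1 - mprime t K m ^+ 2)) (mprime t K m) 0.

Definition rpt (t K : nat) (m : int) : 'rV[R]_3 :=
  vec3 (Num.sqrt (1 - mprime t K m ^+ 2)) 0 (mprime t K m).

Definition Xset (t K : nat) (M : {fset int}) : {fset 'rV[R]_3} :=
  [fset lpt t K m | m in M] `|` [fset rpt t K m | m in M].
End Defs.

(* Main.v *)
Require Import Defs.
From HB Require Import structures.
From mathcomp Require Import all_boot all_order all_algebra.
From mathcomp Require Import finmap.
From mathcomp Require Import reals.
From mathcomp Require Import ring lra.
Import Order.TTheory GRing.Theory Num.Theory.
Local Open Scope ring_scope.
Local Open Scope fset_scope.

Lemma vec3E (R : realType) (a b c : R) :
  [/\ vec3 a b c 0 0 = a, vec3 a b c 0 1 = b & vec3 a b c 0 2%:R = c].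
Proof. by rewrite /vec3 !mxE. Qed.

Lemma enorm_ge (R : realType) (v : 'rV[R]_3) j : `|v 0 j| <= enorm v.
Proof.
rewrite /enorm -sqrtr_sqr ler_sqrt; last by apply: sumr_ge0 => i _; apply: sqr_ge0.
rewrite (bigD1 j) //= lerDl; apply: sumr_ge0 => i _; apply: sqr_ge0.
Qed.

Lemma c_pos (R : realType) (t K : nat) : (1 <= t)%N -> (1 <= K)%N ->
  0 < (t%:R * Num.sqrt K%:R : R).
Proof.
move=> ht hK; apply: mulr_gt0; first by rewrite ltr0n.
by rewrite sqrtr_gt0 ltr0n.
Qed.

Lemma mprime_inj (R : realType) (t K : nat) m1 m2 : (1 <= t)%N -> (1 <= K)%N ->
  mprime R t K m1 = mprime R t K m2 -> m1 = m2.
Proof.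
move=> ht hK; rewrite /mprime => /(congr1 (fun x => x * (t%:R * Num.sqrt K%:R))).
have hc := @c_pos R t K ht hK.
rewrite !mulfVK ?(lt0r_neq0 hc) //.
by move/eqP; rewrite eqr_int => /eqP.
Qed.

Lemma mprime_sqK (R : realType) (t K : nat) m : (1 <= t)%N -> (2 <= K)%N ->
  `|m| <= t%:Z -> mprime R t K m ^+ 2 * K%:R <= 1.
Proof.
move=> ht hK hm.
have hK0 : (0 : R) < K%:R by rewrite ltr0n; case: K hK {hm}.
have ht0 : (0 : R) < t%:R by rewrite ltr0n.
have hmr : `|(m%:~R : R)| <= t%:R.
  by rewrite -intr_norm -[t%:R]/((t%:Z)%:~R : R) ler_int.
rewrite /mprime expr_div_n exprMn sqr_sqrtr ?ler0n //.
have -> : m%:~R ^+ 2 / (t%:R ^+ 2 * K%:R) * K%:R = (m%:~R / t%:R) ^+ 2 :> R.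
  by field; apply/andP; split; rewrite gt_eqF.
rewrite -real_normK ?num_real // normf_div (ger0_norm (ler0n _ t)).
rewrite expr_le1 //; first by rewrite ler_pdivrMr // mul1r.
by rewrite divr_ge0 ?normr_ge0 ?ler0n.
Qed.
Lemma s_lb (R : realType) (t K : nat) m : (1 <= t)%N -> (2 <= K)%N ->
  `|m| <= t%:Z -> K%:R / (K%:R + 1) <= Num.sqrt (1 - mprime R t K m ^+ 2).
Proof.
move=> ht hK hm; have := @mprime_sqK R t K m ht hK hm.
set y := mprime R t K m ^+ 2 => hy.
have hK2 : (2 : R) <= K%:R by rewrite ler_nat.
have hq0 : (0 : R) <= K%:R / (K%:R + 1) by apply: divr_ge0; lra.
rewrite -(ger0_norm hq0) -sqrtr_sqr ler_sqrt; last first.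
  have : 0 <= y by apply: sqr_ge0.
  nra.
have hy' : y <= 1 / K%:R by rewrite ler_pdivlMr //; lra.
suff : (K%:R / (K%:R + 1)) ^+ 2 <= 1 - 1 / K%:R :> R by lra.
rewrite -subr_ge0.
have -> : 1 - 1 / K%:R - (K%:R / (K%:R + 1)) ^+ 2 =
   (K%:R ^+ 2 - K%:R - 1) / (K%:R * (K%:R + 1) ^+ 2) :> R.
  by field; apply/andP; split; apply/lt0r_neq0; lra.
apply: divr_ge0; first by nra.
apply: mulr_ge0; [lra | apply: sqr_ge0].
Qed.

Lemma s_pos (R : realType) (t K : nat) m : (1 <= t)%N -> (2 <= K)%N ->
  `|m| <= t%:Z -> 0 < Num.sqrt (1 - mprime R t K m ^+ 2).
Proof.
move=> ht hK hm; apply: lt_le_trans (@s_lb R t K m ht hK hm).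
have hK2 : (2 : R) <= K%:R by rewrite ler_nat.
by apply: divr_gt0; lra.
Qed.

Lemma s_ub (R : realType) (t K : nat) m :
  Num.sqrt (1 - mprime R t K m ^+ 2) <= 1.
Proof.
rewrite -{2}sqrtr1 ler_sqrt //; have := sqr_ge0 (mprime R t K m); lra.
Qed.

Lemma lpt_inj (R : realType) (t K : nat) m1 m2 : (1 <= t)%N -> (1 <= K)%N ->
  lpt R t K m1 = lpt R t K m2 -> m1 = m2.
Proof.
move=> ht hK /(congr1 (fun v : 'rV[R]_3 => v 0 1)); rewrite /lpt /vec3 !mxE /=.
by apply: mprime_inj.
Qed.

Lemma rpt_inj (R : realType) (t K : nat) m1 m2 : (1 <= t)%N -> (1 <= K)%N ->
  rpt R t K m1 = rpt R t K m2 -> m1 = m2.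
Proof.
move=> ht hK /(congr1 (fun v : 'rV[R]_3 => v 0 2%:R)); rewrite /rpt /vec3 !mxE /=.
by apply: mprime_inj.
Qed.

Lemma lpt_neq_rpt (R : realType) (t K : nat) m1 m2 : (1 <= t)%N -> (2 <= K)%N ->
  `|m1| <= t%:Z -> lpt R t K m1 != rpt R t K m2.
Proof.
move=> ht hK hm; apply/eqP => /(congr1 (fun v : 'rV[R]_3 => v 0 0)).
rewrite /rpt /lpt /vec3 !mxE /=.
have := @s_pos R t K m1 ht hK hm.
have := sqrtr_ge0 (1 - mprime R t K m2 ^+ 2).
lra.
Qed.

Lemma decomp (R : realType) (t K : nat) (M : {fset int}) (V : Type) (idx : V)
  (op : Monoid.com_law idx) (F : 'rV[R]_3 -> V) (T : {fset 'rV[R]_3}) :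
  (1 <= t)%N -> (2 <= K)%N -> (forall m, m \in M -> `|m| <= t%:Z) ->
  T `<=` Xset R t K M ->
  \big[op/idx]_(u <- T) F u =
  op (\big[op/idx]_(m <- [fset m in M | lpt R t K m \in T]) F (lpt R t K m))
     (\big[op/idx]_(m <- [fset m in M | rpt R t K m \in T]) F (rpt R t K m)).
Proof.
move=> ht hK hM hT.
have hK1 : (1 <= K)%N by apply: leq_trans hK.
rewrite (@big_fsetID _ _ op _ (fun x => x \in [fset lpt R t K m | m in M])) /=.
congr (op _ _).
- have -> : [fset x in T | x \in [fset lpt R t K m | m in M]] =
            [fset lpt R t K m | m in [fset m in M | lpt R t K m \in T]].
    apply/fsetP => x; rewrite !inE /=; apply/andP/imfsetP.
    + case=> xT /imfsetP [m /= mM xe]; exists m => //; by rewrite !inE /= mM -xe xT.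
    + case=> m /=; rewrite !inE /= => /andP [mM mT] ->; split => //.
      by apply/imfsetP; exists m.
  rewrite big_imfset //=; move=> a b _ _; exact: lpt_inj.
- have -> : [fset x in T | x \notin [fset lpt R t K m | m in M]] =
            [fset rpt R t K m | m in [fset m in M | rpt R t K m \in T]].
    apply/fsetP => x; rewrite !inE /=; apply/andP/imfsetP.
    + case=> xT xL; move/fsubsetP: hT => /(_ x xT); rewrite /Xset inE.
      case/orP => /imfsetP [m /= mM xe]; first by rewrite xe in_imfset in xL.
      by exists m => //; rewrite !inE /= mM -xe xT.
    + case=> m /=; rewrite !inE /= => /andP [mM mT] ->; split => //.
      apply/imfsetP => -[m' /= m'M] /esym /eqP; apply/negP.
      by apply: lpt_neq_rpt => //; apply: hM.
  rewrite big_imfset //=; move=> a b _ _; exact: rpt_inj.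
Qed.

Lemma centroid_entry (R : realType) (T : {fset 'rV[R]_3}) i :
  centroid T 0 i = (#|` T|%:R)^-1 * \sum_(u <- T) u 0 i.
Proof. by rewrite /centroid !mxE summxE. Qed.

Lemma sum_s_bounds (R : realType) (t K : nat) (A : {fset int}) :
  (1 <= t)%N -> (2 <= K)%N -> (forall m, m \in A -> `|m| <= t%:Z) ->
  #|` A|%:R * (K%:R / (K%:R + 1)) <= \sum_(m <- A) Num.sqrt (1 - mprime R t K m ^+ 2)
  /\ \sum_(m <- A) Num.sqrt (1 - mprime R t K m ^+ 2) <= #|` A|%:R.
Proof.
move=> ht hK hA.
have hc : #|` A|%:R = \sum_(m <- A) (1 : R) by rewrite card_fset_sum1 natr_sum.
split.
- rewrite hc mulr_suml big_seq_cond [X in _ <= X]big_seq_cond.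
  apply: ler_sum => m /andP [mA _]; rewrite mul1r; exact: s_lb (hA m mA).
- rewrite hc; apply: ler_sum => m _; exact: s_ub.
Qed.

Theorem lemma18 (R : realType) (t K : nat) (M : {fset int}) :
  (1 <= t)%N -> (2 <= K)%N ->
  (forall m, m \in M -> `|m| <= t%:Z) ->
  let X := Xset R t K M in
  let k := (2 * K)%N in
  ((exists S : {fset int}, S `<=` M /\ #|` S| = K /\ \sum_(m <- S) m = 0) ->
     exists T : {fset 'rV[R]_3}, T `<=` X /\ #|` T| = k /\ centroid T = 0)
  /\
  (~ (exists S : {fset int}, S `<=` M /\ #|` S| = K /\ \sum_(m <- S) m = 0) ->
     forall T : {fset 'rV[R]_3}, T `<=` X -> #|` T| = k ->
       1 / (2 * t%:R * (K%:R * Num.sqrt K%:R)) <= enorm (centroid T)).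
Proof.
move=> ht hK hM X k.
have hK1 : (1 <= K)%N by apply: leq_trans hK.
have hc := @c_pos R t K ht hK1.
have hmp : forall m : int, (mprime R t K m) = m%:~R / (t%:R * Num.sqrt K%:R).
  by [].
split.
- case=> S [SM [cS sS]].
  have SMin : forall m, m \in S -> m \in M by move=> m; apply/fsubsetP.
  set T := [fset lpt R t K m | m in S] `|` [fset rpt R t K m | m in S].
  have TX : T `<=` X.
    apply/fsubsetP => x; rewrite /X /Xset !inE /=.
    by case/orP => /imfsetP [m /= mS ->]; apply/orP; [left|right];
      apply/imfsetP; exists m => //; apply: SMin.
  have EA : [fset m in M | lpt R t K m \in T] = S.
    apply/fsetP => m; rewrite !inE /=; apply/andP/idP.
    + case=> mM; case/orP => /imfsetP [m' /= m'S].
      * by move/(@lpt_inj R t K _ _ ht hK1) => ->.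
      * by move/eqP; rewrite (negbTE (@lpt_neq_rpt R t K _ _ ht hK (hM m mM))).
    + move=> mS; split; first exact: SMin.
      by apply/orP; left; apply/imfsetP; exists m.
  have EB : [fset m in M | rpt R t K m \in T] = S.
    apply/fsetP => m; rewrite !inE /=; apply/andP/idP.
    + case=> mM; case/orP => /imfsetP [m' /= m'S].
      * move/esym/eqP; rewrite (negbTE (@lpt_neq_rpt R t K _ _ ht hK (hM m' (SMin m' m'S)))).
        by [].
      * by move/(@rpt_inj R t K _ _ ht hK1) => ->.
    + move=> mS; split; first exact: SMin.
      by apply/orP; right; apply/imfsetP; exists m.
  exists T; split => //.
  have cT : #|` T| = k.
    rewrite card_fset_sum1 (@decomp R t K M _ _ _ _ _ ht hK hM TX) EA EB -card_fset_sum1.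
    by rewrite cS /k /= mul2n addnn.
  split => //.
  apply/rowP => i; rewrite centroid_entry (@decomp R t K M _ _ _ _ _ ht hK hM TX) EA EB.
  rewrite -big_split /= mxE.
  apply/eqP; rewrite mulf_eq0; apply/orP; right; apply/eqP.
  case: i => -[|[|[|//]]] hi.
  + by apply: big1 => m _; rewrite /lpt /rpt /vec3 !mxE /= addNr.
  + under eq_bigr => m _ do rewrite /lpt /rpt /vec3 !mxE /= addr0.
    by rewrite -mulr_suml -rmorph_sum sS mul0r.
  + under eq_bigr => m _ do rewrite /lpt /rpt /vec3 !mxE /= add0r.
    by rewrite -mulr_suml -rmorph_sum sS mul0r.
- move=> nS T TX cT.
  set A := [fset m in M | lpt R t K m \in T].
  set B := [fset m in M | rpt R t K m \in T].
  have AM : forall m, m \in A -> `|m| <= t%:Z.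
    by move=> m; rewrite !inE => /andP [/hM].
  have BM : forall m, m \in B -> `|m| <= t%:Z.
    by move=> m; rewrite !inE => /andP [/hM].
  have cAB : (#|` A| + #|` B| = k)%N.
    by rewrite -cT [RHS]card_fset_sum1 (@decomp R t K M _ _ _ _ _ ht hK hM TX)
      -!card_fset_sum1.
  have entry : forall i, centroid T 0 i = (k%:R)^-1 *
      (\sum_(m <- A) lpt R t K m 0 i + \sum_(m <- B) rpt R t K m 0 i).
    by move=> i; rewrite centroid_entry cT (@decomp R t K M _ _ _ _ _ ht hK hM TX).
  have hk0 : (0 : R) < k%:R by rewrite ltr0n /k muln_gt0.
  have hK2 : (2 : R) <= K%:R by rewrite ler_nat.
  have E : 1 / (2 * t%:R * (K%:R * Num.sqrt K%:R)) =
           (k%:R)^-1 * (1 / (t%:R * Num.sqrt K%:R)) :> R.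
    rewrite /k natrM; field.
    have := hc; rewrite lt0r => /andP [hc0 _].
    rewrite mulf_eq0 negb_or in hc0; case/andP: hc0 => -> ->.
    by rewrite /=; apply/lt0r_neq0; lra.
  rewrite E.
  have hc1 : 1 / (t%:R * Num.sqrt K%:R) <= (1 : R).
    rewrite ler_pdivrMr // mul1r.
    have h1 : (1 : R) <= t%:R by rewrite ler1n.
    have h2 : (1 : R) <= Num.sqrt K%:R.
      by rewrite -{1}sqrtr1 ler_sqrt //; lra.
    nra.
  have hki : (0 : R) <= (k%:R)^-1 by rewrite invr_ge0 ltW.
  have e0 : centroid T 0 0 = (k%:R)^-1 *
      (\sum_(m <- B) Num.sqrt (1 - mprime R t K m ^+ 2)
       - \sum_(m <- A) Num.sqrt (1 - mprime R t K m ^+ 2)).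
    rewrite entry; congr (_ * _); rewrite addrC -sumrN; congr (_ + _)%R;
      apply: eq_bigr => m _; by rewrite /lpt /rpt /vec3 !mxE.
  have [hA1 hA2] := @sum_s_bounds R t K A ht hK AM.
  have [hB1 hB2] := @sum_s_bounds R t K B ht hK BM.
  have hq0 : (0 : R) <= K%:R / (K%:R + 1) by apply: divr_ge0; lra.
  have hq : K%:R / (K%:R + 1) * (K%:R + 1) = K%:R :> R.
    by rewrite divfK //; apply/lt0r_neq0; lra.
  have cABr : ((#|` A|%:R + #|` B|%:R)%R = 2 * K%:R :> R).
    by rewrite -natrD cAB /k natrM.
  have fin : 1 <= `|\sum_(m <- B) Num.sqrt (1 - mprime R t K m ^+ 2)
       - \sum_(m <- A) Num.sqrt (1 - mprime R t K m ^+ 2)| ->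
     (k%:R)^-1 * (1 / (t%:R * Num.sqrt K%:R)) <= enorm (centroid T).
    move=> h1; apply: le_trans; last exact: (@enorm_ge R _ 0).
    rewrite e0 normrM (ger0_norm hki); apply: ler_wpM2l => //.
    exact: le_trans hc1 h1.
  case: (ltngtP #|` A| K) => hA; last first.
  +
    apply: le_trans; last exact: (@enorm_ge R _ 1).
    have e1 : centroid T 0 1 = (k%:R)^-1 * ((\sum_(m <- A) m)%:~R / (t%:R * Num.sqrt K%:R)).
      rewrite entry; congr (_ * _).
      rewrite [X in (_ + X)%R]big1 ?addr0; last by move=> m _; rewrite /rpt /vec3 !mxE.
      rewrite rmorph_sum mulr_suml; apply: eq_bigr => m _.
      by rewrite /lpt /vec3 !mxE.
    have z0 : \sum_(m <- A) m != 0.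
      apply/eqP => z0; apply: nS; exists A; split; first exact: fset_sub.
      by split.
    rewrite e1 normrM (ger0_norm hki); apply: ler_wpM2l => //.
    rewrite normf_div (ger0_norm (ltW hc)); apply: ler_wpM2r.
      by rewrite invr_ge0 ltW.
    by rewrite -intr_norm ler1z -gtz0_ge1 normr_gt0.
  + apply: fin.
    have hAr : ((K%:R + 1)%R <= #|` A|%:R :> R) by rewrite natr1 ler_nat.
    set a := #|` A|%:R in hAr hA1 hA2 cABr; set b := #|` B|%:R in hB1 hB2 cABr.
    set q := K%:R / (K%:R + 1) in hq0 hq hA1 hB1.
    set SA := \sum_(m <- A) _ in hA1 hA2 *; set SB := \sum_(m <- B) _ in hB1 hB2 *.
    have : 1 <= SA - SB by nra.
    move=> h; rewrite ler0_norm; lra.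
  + apply: fin.
    have hAr : ((#|` A|%:R + 1)%R <= K%:R :> R) .
      by rewrite natr1 ler_nat.
    set a := #|` A|%:R in hAr hA1 hA2 cABr; set b := #|` B|%:R in hB1 hB2 cABr.
    set q := K%:R / (K%:R + 1) in hq0 hq hA1 hB1.
    set SA := \sum_(m <- A) _ in hA1 hA2 *; set SB := \sum_(m <- B) _ in hB1 hB2 *.
    have : 1 <= SB - SA by nra.
    move=> h; rewrite ger0_norm; lra.
Qed.
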